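(* Let $k\geq 0$ be fixed and consider the one-parameter family of maps $f(x,r)=x^2\exp(r-x)+k$ with bifurcation parameter $r\in\mathbb{R}$. Let \[ x_0=\frac{k+3+\sqrt{k^2-2k+9}}{2},\qquad r_0=x_0-\ln\big(x_0(x_0-2)\big)\quad\Big(\text{equivalently } r_0=x_0+\ln\big((x_0-k)/x_0^2\big)\Big). \] Then $x_0$ is a fixed point of $f(\cdot,r_0)$ and the family undergoes a supercritical flip bifurcation at the fixed point $x_0$ for the bifurcation value $r=r_0$.
   Context: For a smooth one-parameter family $x\mapsto f(x,a)$ of maps of $\mathbb{R}$ with a fixed point $x_0$ at $a=a_0$, one says that a flip (period-doubling) bifurcation occurs at $x_0$ for $a=a_0$ if $\frac{\partial f}{\partial x}(x_0,a_0)=-1$ and the nondegeneracy conditions (B.1) $\mathcal{Q}f(x_0,a_0):=\frac12\big(\frac{\partial^2 f}{\partial x^2}(x_0,a_0)\big)^2+\frac13\frac{\partial^3 f}{\partial x^3}(x_0,a_0)\neq 0$ and (B.2) $\frac{\partial^2 f}{\partial x\partial a}(x_0,a_0)\neq0$ hold; then smooth invertible changes of coordinates and parameter transform the system into $\eta\mapsto-(1+\beta)\eta\pm\eta^3+O(\eta^4)$. The flip bifurcation is called supercritical if $\mathcal{Q}f(x_0,a_0)>0$ (the fixed point loses stability and a stable period-2 orbit emerges). *)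

(* Defs.v *)
From Stdlib Require Import Reals.
From Coquelicot Require Import Coquelicot.
Open Scope R_scope.

Definition dfx (f : R -> R -> R) (x0 a0 : R) : R :=
  Derive (fun x => f x a0) x0.
Definition dfxx (f : R -> R -> R) (x0 a0 : R) : R :=
  Derive_n (fun x => f x a0) 2 x0.
Definition dfxxx (f : R -> R -> R) (x0 a0 : R) : R :=
  Derive_n (fun x => f x a0) 3 x0.
Definition dfxa (f : R -> R -> R) (x0 a0 : R) : R :=
  Derive (fun a => Derive (fun x => f x a) x0) a0.

Definition Qf (f : R -> R -> R) (x0 a0 : R) : R :=
  / 2 * (dfxx f x0 a0) ^ 2 + / 3 * dfxxx f x0 a0.

Definition flip_bifurcation (f : R -> R -> R) (x0 a0 : R) : Prop :=
  f x0 a0 = x0 /\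
  (forall n, (n <= 3)%nat -> ex_derive_n (fun x => f x a0) n x0) /\
  ex_derive (fun a => Derive (fun x => f x a) x0) a0 /\
  dfx f x0 a0 = -1 /\
  Qf f x0 a0 <> 0 /\
  dfxa f x0 a0 <> 0.

Definition supercritical_flip (f : R -> R -> R) (x0 a0 : R) : Prop :=
  flip_bifurcation f x0 a0 /\ Qf f x0 a0 > 0.

(* Main.v *)
Require Import Defs.
From Stdlib Require Import Reals Lra Psatz.
From Coquelicot Require Import Coquelicot.
Open Scope R_scope.

Definition FF k r := fun x => x ^ 2 * exp (r - x) + k.
Definition D1 (r : R) := fun x => (2*x - x^2) * exp (r - x).
Definition D2 (r : R) := fun x => (x^2 - 4*x + 2) * exp (r - x).
Definition D3 (r : R) := fun x => (- x^2 + 6*x - 6) * exp (r - x).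
Lemma d1 k r x : is_derive (FF k r) x (D1 r x).
Proof. unfold FF, D1. auto_derive; [auto| unfold Rminus; ring]. Qed.
Lemma d2 r x : is_derive (D1 r) x (D2 r x).
Proof. unfold D1, D2. auto_derive; [auto| unfold Rminus; ring]. Qed.
Lemma d3 r x : is_derive (D2 r) x (D3 r x).
Proof. unfold D3, D2. auto_derive; [auto| unfold Rminus; ring]. Qed.
Lemma da x a : is_derive (fun a => D1 a x) a (D1 a x).
Proof. unfold D1. auto_derive; [auto| unfold Rminus; ring]. Qed.

Lemma Dn1 k r x : Derive_n (FF k r) 1 x = D1 r x.
Proof. simpl. apply is_derive_unique, d1. Qed.
Lemma Dn2 k r x : Derive_n (FF k r) 2 x = D2 r x.
Proof.
  simpl. rewrite (Derive_ext _ (D1 r)). apply is_derive_unique, d2.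
  intro t. apply is_derive_unique, d1.
Qed.
Lemma Dn3 k r x : Derive_n (FF k r) 3 x = D3 r x.
Proof.
  change (Derive (Derive_n (FF k r) 2) x = D3 r x).
  rewrite (Derive_ext _ (D2 r)). apply is_derive_unique, d3.
  intro t. apply Dn2.
Qed.

Theorem theorem2p2 (k : R) (hk : 0 <= k) :
  let x0 := (k + 3 + sqrt (k ^ 2 - 2 * k + 9)) / 2 in
  let r0 := x0 - ln (x0 * (x0 - 2)) in
  supercritical_flip (fun x r => x ^ 2 * exp (r - x) + k) x0 r0.
Proof.
  intros x0 r0.
  set (s := sqrt (k ^ 2 - 2 * k + 9)).
  assert (Hs2 : s * s = k ^ 2 - 2 * k + 9) by (apply sqrt_sqrt; nra).
  assert (Hs0 : 0 <= s) by apply sqrt_pos.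
  assert (Hs : 2 < s).
  { destruct (Rle_lt_dec s 2) as [h|h]; [|exact h]. assert (s * s <= 2 * 2) by (apply Rmult_le_compat; lra). nra. }
  assert (Hx2 : 2 < x0) by (unfold x0; fold s; lra).
  assert (Hq : (x0 - k) * (x0 - 2) = x0) by (unfold x0; fold s; nra).
  assert (HE : exp (r0 - x0) = / (x0 * (x0 - 2))).
  { unfold r0. replace (x0 - ln (x0 * (x0 - 2)) - x0) with (- ln (x0 * (x0 - 2))) by ring.
    rewrite exp_Ropp, exp_ln; [reflexivity | nra]. }
  assert (Hf : forall r, (fun x => (fun x r => x ^ 2 * exp (r - x) + k) x r) = FF k r)
    by reflexivity.
  unfold supercritical_flip, flip_bifurcation, Qf, dfx, dfxx, dfxxx, dfxa.
  rewrite !Hf.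
  rewrite (is_derive_unique _ _ _ (d1 k r0 x0)), Dn2, Dn3.
  rewrite (Derive_ext _ (fun a => D1 a x0)); [| intro t; apply is_derive_unique, d1].
  replace (Derive (fun a : R => D1 a x0) r0) with (D1 r0 x0) by (symmetry; apply is_derive_unique, da).
  unfold D1, D2, D3. rewrite HE.
  assert (Hpos : 0 < x0 * (x0 - 2)) by nra.
  assert (HQ : / 2 * ((x0 ^ 2 - 4 * x0 + 2) * / (x0 * (x0 - 2))) ^ 2 +
     / 3 * ((- x0 ^ 2 + 6 * x0 - 6) * / (x0 * (x0 - 2))) > 0).
  { replace (/ 2 * ((x0 ^ 2 - 4 * x0 + 2) * / (x0 * (x0 - 2))) ^ 2 +
     / 3 * ((- x0 ^ 2 + 6 * x0 - 6) * / (x0 * (x0 - 2))))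
     with (((x0 - 2)^4 + 8 * x0 - 4) * / (6 * (x0 * (x0 - 2))^2)) by (field; lra).
    apply Rmult_lt_0_compat.
    - pose proof (pow2_ge_0 ((x0-2)^2)). rewrite <- pow_mult in H. simpl in H. nra.
    - apply Rinv_0_lt_compat. nra. }
  assert (H1 : (2 * x0 - x0 ^ 2) * / (x0 * (x0 - 2)) = -1) by (field; lra).
  rewrite H1.
  split; [repeat split | exact HQ].
  - replace (x0 ^ 2) with ((x0 - k) * (x0 * (x0 - 2))) by nra.
    field. lra.
  - intros n Hn. destruct n as [|[|[|[|n]]]]; try lia; simpl; auto.
    + eexists; apply d1.
    + exists (D2 r0 x0). apply (is_derive_ext (D1 r0)); [|apply d2].
      intro t; symmetry; apply is_derive_unique, d1.
    + exists (D3 r0 x0). apply (is_derive_ext (D2 r0)); [|apply d3].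
      intro t; symmetry; apply Dn2.
  - exists (D1 r0 x0). apply (is_derive_ext (fun a => D1 a x0)); [|apply da].
    intro t; symmetry; apply is_derive_unique, d1.
  - lra.
  - lra.
Qed.
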